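(* Let $G$ be a graph whose twin graph $G^*$ is isomorphic to $K_3$ and has at most one vertex of type (1K). Then $D(G)=n(G)-2$ if and only if $G$ is isomorphic to $K_{1,2,2}$ or to $K_{1,1,t}$ for some $t\ge 2$.
   Context: All graphs are finite and simple; $n(G)=|V(G)|$; $N_G(u)$ is the neighborhood of $u$; $K_{a,b,c}$ is the complete tripartite graph. A distinguishing coloring of a graph $G$ is a (not necessarily proper) vertex coloring such that the only automorphism of $G$ mapping every vertex to a vertex of the same color is the identity; the distinguishing number $D(G)$ is the minimum number of colors in a distinguishing coloring of $G$. Two distinct vertices $u,v$ are twins if $N_G(u)\setminus\{v\}=N_G(v)\setminus\{u\}$. The relation $u\equiv v$ iff $u=v$ or $u,v$ are twins is an equivalence relation; the class of $v$ is denoted $v^*$. The twin graph $G^*$ has the equivalence classes as vertices, distinct classes $u^*,v^*$ being adjacent iff $uv\in E(G)$. Each class induces a complete or an edgeless graph. A class $v^*$ is of type (1) if $|v^*|=1$, of type (K) if $|v^*|\ge 2$ and it induces a complete graph, and of type (N) if $|v^*|\ge2$ and it induces an edgeless graph; type (1K) means type (1) or (K), type (1N) means (1) or (N), and type (KN) means (K) or (N). *)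

(* Defs.v *)
From mathcomp Require Import all_boot fingroup perm.
Set Implicit Arguments. Unset Strict Implicit. Unset Printing Implicit Defensive.

Section Graphs.
Variable T : finType.
Variable e : rel T.

Definition simple_graph : Prop := symmetric e /\ irreflexive e.

Definition is_autb (s : {perm T}) : bool :=
  [forall x, forall y, e (s x) (s y) == e x y].

Definition distinguishingb (k : nat) (c : {ffun T -> 'I_k}) : bool :=
  [forall s : {perm T}, (is_autb s && [forall x, c (s x) == c x]) ==> (s == 1%g)].

Definition has_dcol (k : nat) : bool :=
  [exists c : {ffun T -> 'I_k}, distinguishingb c].

Lemma has_dcol_card : exists k, has_dcol k.
Proof.
exists #|T|; apply/existsP; exists [ffun x => enum_rank x].
apply/forallP=> s; apply/implyP=> /andP[_ /forallP H].
apply/eqP/permP=> x; rewrite perm1.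
by have := H x; rewrite !ffunE => /eqP/enum_rank_inj.
Qed.

Definition dist_number : nat := ex_minn has_dcol_card.

Definition twins (u v : T) : bool :=
  (u != v) && ([set w | e u w] :\ v == [set w | e v w] :\ u).

Definition twin_eq (u v : T) : bool := (u == v) || twins u v.

Definition twin_class (v : T) : {set T} := [set u | twin_eq v u].

Definition twin_classes : {set {set T}} := [set twin_class v | v in T].

Definition twin_adj (A B : {set T}) : bool :=
  (A != B) && [exists u in A, exists v in B, e u v].

Definition twin_graph_K3 : Prop :=
  #|twin_classes| = 3 /\
  forall A B, A \in twin_classes -> B \in twin_classes -> A != B -> twin_adj A B.

Definition type1K (A : {set T}) : bool :=
  (#|A| == 1) ||
  ((2 <= #|A|) && [forall u in A, forall v in A, (u != v) ==> e u v]).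

End Graphs.

Definition graph_iso (T T' : finType) (e : rel T) (e' : rel T') : Prop :=
  exists f : T -> T', bijective f /\ forall x y, e' (f x) (f y) = e x y.

Definition tri_part (a b c : nat) (x : ('I_a + 'I_b) + 'I_c) : nat :=
  match x with
  | inl (inl _) => 0
  | inl (inr _) => 1
  | inr _ => 2
  end.

Definition Ktri_vert (a b c : nat) : finType := (('I_a + 'I_b) + 'I_c)%type.

Definition Ktri (a b c : nat) : rel (Ktri_vert a b c) :=
  fun x y => tri_part x != tri_part y.
Arguments Ktri : clear implicits.

(* Main.v *)
Require Import Defs.
From mathcomp Require Import all_boot fingroup perm zify.
Set Implicit Arguments. Unset Strict Implicit. Unset Printing Implicit Defensive.

Section Twin.
Variables (T : finType) (e : rel T).
Hypothesis Hsym : symmetric e.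
Hypothesis Hirr : irreflexive e.

Lemma twinsP u v : reflect (u != v /\ forall w, w != u -> w != v -> e u w = e v w)
  (twins e u v).
Proof.
apply: (iffP andP) => -[Huv H]; split => //.
  move=> w Hwu Hwv; move/eqP/setP: H => /(_ w); by rewrite !inE Hwu Hwv.
apply/eqP/setP => w; rewrite !inE.
case: (eqVneq w v) => [->|Hwv]; first by rewrite Hirr andbF.
case: (eqVneq w u) => [->|Hwu]; first by rewrite Hirr.
by rewrite H.
Qed.

Lemma teq_refl u : twin_eq e u u.
Proof. by rewrite /twin_eq eqxx. Qed.

Lemma teq_sym u v : twin_eq e u v = twin_eq e v u.
Proof.
rewrite /twin_eq eq_sym; congr (_ || _).
apply/twinsP/twinsP => -[H1 H2]; split; rewrite 1?eq_sym // => w *; by rewrite H2.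
Qed.

Lemma teqP u v : twin_eq e u v -> forall w, w != u -> w != v -> e u w = e v w.
Proof.
case/orP => [/eqP -> //|/twinsP [_ H]]; exact: H.
Qed.

Lemma teqI u v : (forall w, w != u -> w != v -> e u w = e v w) -> twin_eq e u v.
Proof.
move=> H; rewrite /twin_eq; case: eqVneq => //= Huv; apply/twinsP; by split.
Qed.

Lemma teq_trans u v w : twin_eq e u v -> twin_eq e v w -> twin_eq e u w.
Proof.
move=> H1 H2.
case: (eqVneq u v) => [->//|Huv]; case: (eqVneq v w) => [<-//|Hvw].
case: (eqVneq u w) => [->|Huw]; first exact: teq_refl.
apply: teqI => x Hxu Hxw.
case: (eqVneq x v) => [->|Hxv]; last by rewrite (teqP H1) // (teqP H2).
have E1 : e v u = e w u by apply: (teqP H2); rewrite // eq_sym.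
have E2 : e u w = e v w by apply: (teqP H1); rewrite // eq_sym.
by rewrite Hsym E1 Hsym E2 Hsym.
Qed.

Lemma tclassE u v : (twin_class e u == twin_class e v) = twin_eq e u v.
Proof.
apply/eqP/idP => [H|H].
  have : v \in twin_class e v by rewrite inE teq_refl.
  by rewrite -H inE.
apply/setP => x; rewrite !inE; apply/idP/idP => Hx.
  by apply: teq_trans Hx; rewrite teq_sym.
exact: teq_trans Hx.
Qed.

Lemma teq_edge u x w : twin_eq e u x -> ~~ twin_eq e u w -> e u w = e x w.
Proof.
move=> H Hw; apply: teqP => //; apply/eqP => Ew; move: Hw; rewrite Ew ?teq_refl //.
by rewrite H.
Qed.

Lemma aut_teq (s : {perm T}) : is_autb e s ->
  forall u v, twin_eq e u v -> twin_eq e (s u) (s v).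
Proof.
move/forallP=> Hs u v H; apply: teqI => w Hu Hv.
have Hw : w = s ((s^-1)%g w) by rewrite permKV.
have Ha : forall x y, e (s x) (s y) = e x y by move=> x y; exact/eqP/(forallP (Hs x)).
rewrite Hw !Ha (teqP H) //.
  by apply: contra Hu => /eqP <-; rewrite permKV.
by apply: contra Hv => /eqP <-; rewrite permKV.
Qed.

Lemma aut_inv (s : {perm T}) : is_autb e s -> is_autb e (s^-1)%g.
Proof.
move/forallP=> Hs; apply/forallP => x; apply/forallP => y.
by rewrite -{2}(permKV s x) -{2}(permKV s y) (eqP (forallP (Hs _) _)).
Qed.

Lemma aut_teqE (s : {perm T}) : is_autb e s ->
  forall u v, twin_eq e (s u) (s v) = twin_eq e u v.
Proof.
move=> Hs u v; apply/idP/idP; last exact: aut_teq.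
by move/(aut_teq (aut_inv Hs)); rewrite !permK.
Qed.

End Twin.
Section Struct.
Variables (T : finType) (e : rel T).
Hypothesis Hsym : symmetric e.
Hypothesis Hirr : irreflexive e.
Let tsym := teq_sym Hirr.
Let ttr := teq_trans Hsym Hirr.
Let tcl := tclassE Hsym Hirr.
Let tP := teqP Hirr.
Let tedge := teq_edge Hirr.
Let trefl := @teq_refl T e.

Lemma teq_tr3 w a b : twin_eq e w a -> twin_eq e w b -> twin_eq e a b.
Proof. by move=> H1 H2; apply: ttr H2; rewrite tsym. Qed.

Lemma class_indep w u v : twin_eq e w u -> twin_eq e w v -> u != v -> ~~ e u v ->
  forall x y, twin_eq e w x -> twin_eq e w y -> x != y -> e x y = false.
Proof.
move=> Hu Hv Huv He.
have C1 : forall z, twin_eq e w z -> z != u -> e u z = false.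
  move=> z Hz Hzu; case: (eqVneq z v) => [->|Hzv]; first exact: negbTE.
  rewrite Hsym (tP (teq_tr3 Hz Hv)) 1?eq_sym //; last by rewrite eq_sym.
  by rewrite Hsym; exact: negbTE.
move=> x y Hx Hy Hxy.
case: (eqVneq x u) => [Exu|Hxu]; first by subst x; apply: C1 => //; rewrite eq_sym.
case: (eqVneq y u) => [Eyu|Hyu]; first by subst y; rewrite Hsym; apply: C1.
have -> : e x y = e u y.
  by apply: (tP (teq_tr3 Hx Hu)) => //; rewrite eq_sym.
exact: C1.
Qed.

Lemma not1K_indep P v : P = twin_class e v -> ~~ type1K e P ->
    2 <= #|P| /\ forall x y, twin_eq e v x -> twin_eq e v y -> e x y = false.
Proof.
move=> EP; rewrite /type1K negb_or => /andP [H1 H2].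
have H0 : 0 < #|P| by apply/card_gt0P; exists v; rewrite EP inE trefl.
have H2P : 2 <= #|P|.
  by move: H0 H1; case: #|P| => [|[|]].
split => //; move: H2; rewrite H2P /= => /forallPn [u]; rewrite negb_imply => /andP [Hu].
move/forallPn => [w]; rewrite negb_imply => /andP [Hw]; rewrite negb_imply => /andP [Huw He].
move: Hu Hw; rewrite EP !inE => Hu Hw x y Hx Hy.
case: (eqVneq x y) => [->|Hxy]; first exact: Hirr.
exact: class_indep Hu Hw Huw He x y Hx Hy Hxy.
Qed.

Lemma structure : twin_graph_K3 e ->
  #|[set A in twin_classes e | type1K e A]| <= 1 ->
  exists q : T -> nat, [/\ forall x, q x < 3,
   forall x y, twin_eq e x y = (q x == q y),
   forall x y, q x != q y -> e x y,
   forall x y, q x = q y -> q x != 0 -> e x y = false &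
   [/\ 2 <= #|[set x | q x == 1]|, 2 <= #|[set x | q x == 2]| & 0 < #|[set x | q x == 0]| ]].
Proof.
move=> [H3 Hadj] H1K.
set S := twin_classes e; set K := [set A in S | type1K e A].
have : 1 < #|S :\: K|.
  have := cardsID K S; rewrite H3.
  have : #|S :&: K| <= 1 by apply: leq_trans H1K; apply: subset_leq_card; exact: subsetIr.
  lia.
case/card_gt1P => A [B [HA HB HAB]].
move: HA HB; rewrite !inE => /andP [HAK HAS] /andP [HBK HBS].
have HAt : ~~ type1K e A by move: HAK; rewrite HAS.
have HBt : ~~ type1K e B by move: HBK; rewrite HBS.
have : #|S :\ A :\ B| == 1.
  have := cardsD1 A S; have := cardsD1 B (S :\ A).
  rewrite HAS !inE HBS eq_sym HAB H3 /=; lia.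
case/cards1P => C HC.
have : C \in S :\ A :\ B by rewrite HC inE.
rewrite !inE => /and3P [HCB HCA HCS].
case/imsetP: HAS => va _ EA; case/imsetP: HBS => vb _ EB; case/imsetP: HCS => vc _ EC.
have nab : ~~ twin_eq e va vb by rewrite -tcl -EA -EB.
have nac : ~~ twin_eq e va vc by rewrite -tcl -EA -EC eq_sym.
have nbc : ~~ twin_eq e vb vc by rewrite -tcl -EB -EC eq_sym.
pose q x := if twin_eq e va x then 1 else if twin_eq e vb x then 2 else 0.
have q3 : forall x, q x < 3.
  by move=> x; rewrite /q; case: (twin_eq e va x) => //; case: (twin_eq e vb x).
have cls : forall x, twin_class e x = if q x == 1 then A else if q x == 2 then B else C.
  move=> x; rewrite /q; case Ha: (twin_eq e va x) => /=.
    by rewrite EA; apply/eqP; rewrite tcl tsym.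
  case Hb: (twin_eq e vb x) => /=.
    by rewrite EB; apply/eqP; rewrite tcl tsym.
  have : twin_class e x \in S :\ A :\ B.
    by rewrite !inE imset_f // andbT EA EB !tcl (tsym x va) (tsym x vb) Ha Hb.
  by rewrite HC inE => /eqP.
have hAB := negbTE HAB; have hBA : (B == A) = false by rewrite eq_sym.
have hCA := negbTE HCA; have hAC : (A == C) = false by rewrite eq_sym.
have hCB := negbTE HCB; have hBC : (B == C) = false by rewrite eq_sym.
have Hq : forall x y, twin_eq e x y = (q x == q y).
  move=> x y; rewrite -tcl !cls.
  have := q3 x; have := q3 y.
  case: (q x) => [|[|[|]]] //; case: (q y) => [|[|[|]]] //= _ _;
  by rewrite ?eqxx ?hAB ?hBA ?hAC ?hCA ?hBC ?hCB.
have qA : forall x, (q x == 1) = twin_eq e va x.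
  by move=> x; rewrite /q; case: (twin_eq e va x) => //; case: (twin_eq e vb x).
have qB : forall x, (q x == 2) = twin_eq e vb x.
  move=> x; rewrite /q; case Ha: (twin_eq e va x); last by case: (twin_eq e vb x).
  apply/esym/negbTE; apply: contra nab => Hb; apply: ttr Ha _; by rewrite tsym.
have [sA iA] := not1K_indep EA HAt; have [sB iB] := not1K_indep EB HBt.
exists q; split => //; last split.
- move=> x y; rewrite -Hq => Hxy.
  have Hne : twin_class e x != twin_class e y by rewrite tcl.
  have Hcx : twin_class e x \in twin_classes e by apply: imset_f.
  have Hcy : twin_class e y \in twin_classes e by apply: imset_f.
  case/andP: (Hadj _ _ Hcx Hcy Hne) => _.
  case/existsP => u /andP [Hu /existsP [v /andP [Hv Huv]]].
  move: Hu Hv; rewrite !inE => Hu Hv.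
  have nuv : ~~ twin_eq e u v.
    apply: contra Hxy => Huv'; apply: ttr Hu _; apply: ttr Huv' _.
    by rewrite tsym.
  have E1 : e u v = e x v by apply: tedge; rewrite // tsym.
  have nvx : ~~ twin_eq e v x.
    apply: contra nuv => H; rewrite tsym; exact: ttr H Hu.
  have E2 : e v x = e y x by apply: tedge; rewrite // tsym.
  by rewrite Hsym -E2 Hsym -E1.
- move=> x y Exy Hx0.
  have := q3 x; move: Hx0.
  case Ex : (q x) => [|[|[|]]] //= _ _.
    by apply: iA; rewrite -qA ?Ex // -Exy Ex.
  by apply: iB; rewrite -qB ?Ex // -Exy Ex.
- by rewrite (eq_card (B := A)) // => x; rewrite inE qA EA inE.
- by rewrite (eq_card (B := B)) // => x; rewrite inE qB EB inE.
- apply/card_gt0P; exists vc; rewrite inE /q.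
  by rewrite (negbTE nac) (negbTE nbc).
Qed.

End Struct.
Definition fcol (a b c p i : nat) : nat :=
  if p == 1 then i
  else if p == 2 then (if (a == b) && (i == b.-1) then b else i)
  else (if (c == a) && (c == b) then i.+1
        else if ((c == a) || (c == b)) && (i == c.-1) then c else i).

Definition msz (a b c p : nat) := if p == 1 then a else if p == 2 then b else c.

Lemma fcol_inj a b c p i j : p < 3 -> i < msz a b c p -> j < msz a b c p ->
  fcol a b c p i = fcol a b c p j -> i = j.
Proof.
rewrite /fcol /msz; case: p => [|[|[|]]] //= _; repeat case: ifP; lia.
Qed.

Lemma fcol_bound a b c p i : p < 3 -> i < msz a b c p ->
  fcol a b c p i <= maxn (maxn a.-1 (if a == b then b else b.-1)) (if (c == a) || (c == b) then c else c.-1).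
Proof.
rewrite /fcol /msz; case: p => [|[|[|]]] //= _; repeat case: ifP; lia.
Qed.

Lemma fcol_wit a b c p p' : 2 <= a -> 2 <= b -> 1 <= c -> p < 3 -> p' < 3 -> p != p' ->
  msz a b c p = msz a b c p' ->
  exists2 i, i < msz a b c p & forall j, j < msz a b c p' -> fcol a b c p' j != fcol a b c p i.
Proof.
rewrite /fcol /msz => ha hb hc.
case: p => [|[|[|]]] //; case: p' => [|[|[|]]] //= _ _ _ E.
- exists c.-1; first lia. move=> j hj; repeat case: ifP; lia.
- exists (if a == b then c.-2 else c.-1); first by case: ifP; lia.
  move=> j hj; repeat case: ifP; lia.
- exists (if b == c then 0 else a.-1); first by case: ifP; lia.
  move=> j hj; repeat case: ifP; lia.
- exists a.-1; first lia. move=> j hj; repeat case: ifP; lia.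
- exists (if a == b then 0 else b.-1); first by case: ifP; lia.
  move=> j hj; repeat case: ifP; lia.
- exists b.-1; first lia. move=> j hj; repeat case: ifP; lia.
Qed.

Lemma arith_main a b c : 2 <= a -> 2 <= b -> 1 <= c -> ~~ [&& a == 2, b == 2 & c == 1] ->
  maxn (maxn a.-1 (if a == b then b else b.-1)) (if (c == a) || (c == b) then c else c.-1)
  <= a + b + c - 4.
Proof. move=> *; repeat case: ifP; lia. Qed.
Section Col.
Variables (T : finType) (e : rel T).
Hypothesis Hsym : symmetric e.
Hypothesis Hirr : irreflexive e.
Variable q : T -> nat.
Hypothesis q3 : forall x, q x < 3.
Hypothesis Hq : forall x y, twin_eq e x y = (q x == q y).
Let m p := #|[set x | q x == p]|.
Let a := m 1. Let b := m 2. Let c := m 0.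
Hypothesis ha : 2 <= a.
Hypothesis hb : 2 <= b.
Hypothesis hc : 1 <= c.
Variable k : nat.
Hypothesis hk : maxn (maxn a.-1 (if a == b then b else b.-1)) (if (c == a) || (c == b) then c else c.-1) <= k.

Let msz_m p : p < 3 -> msz a b c p = m p.
Proof. by rewrite /msz; case: p => [|[|[|]]]. Qed.

Let rk x := index x (enum [set y | q y == q x]).

Let rk_lt x : rk x < m (q x).
Proof. by rewrite /rk /m cardE index_mem mem_enum inE. Qed.

Let rk_inj x y : q x = q y -> rk x = rk y -> x = y.
Proof.
rewrite /rk => E; rewrite E; apply: (index_inj x); by rewrite mem_enum inE ?E.
Qed.

Let rk_surj p i (x0 : T) : i < m p -> exists y, q y = p /\ rk y = i.
Proof.
move=> Hi; have Hs : i < size (enum [set y | q y == p]) by rewrite -cardE.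
set y := nth x0 (enum [set y | q y == p]) i.
have Hy : y \in enum [set y | q y == p] by apply: mem_nth.
have Eq : q y = p by move: Hy; rewrite mem_enum inE => /eqP.
exists y; split => //; rewrite /rk Eq index_uniq //; exact: enum_uniq.
Qed.

Definition colf : {ffun T -> 'I_k.+1} := [ffun x => inord (fcol a b c (q x) (rk x))].

Let colE x : val (colf x) = fcol a b c (q x) (rk x).
Proof.
rewrite ffunE; apply: inordK; rewrite ltnS; apply: leq_trans hk; apply: fcol_bound => //.
by rewrite msz_m.
Qed.

Lemma colf_dist : distinguishingb e colf.
Proof.
apply/forallP => s; apply/implyP => /andP [Haut /forallP Hc].
have Hc' : forall x, fcol a b c (q (s x)) (rk (s x)) = fcol a b c (q x) (rk x).
  by move=> x; rewrite -!colE (eqP (Hc x)).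
have Hs : forall x y, (q (s x) == q (s y)) = (q x == q y).
  by move=> x y; rewrite -!Hq aut_teqE.
have Hsi : forall x y, (q ((s^-1)%g x) == q ((s^-1)%g y)) = (q x == q y).
  by move=> x y; rewrite -!Hq aut_teqE // aut_inv.
have Q : forall x, q (s x) = q x.
  move=> x; apply/eqP; apply/negPn/negP => Hne.
  have HP : forall y, q y = q x -> q (s y) = q (s x).
    by move=> y Hy; apply/eqP; rewrite Hs Hy.
  have HP' : forall z, q z = q (s x) -> q ((s^-1)%g z) = q x.
    by move=> z Hz; apply/eqP; rewrite -(permK s x) Hsi Hz.
  have L1 : m (q x) <= m (q (s x)).
    rewrite /m -(card_imset _ (@perm_inj _ s)); apply: subset_leq_card.
    apply/subsetP => z /imsetP [y]; rewrite inE => /eqP Hy ->; by rewrite inE HP.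
  have L2 : m (q (s x)) <= m (q x).
    rewrite /m -(card_imset _ (@perm_inj _ (s^-1)%g)); apply: subset_leq_card.
    apply/subsetP => z /imsetP [y]; rewrite inE => /eqP Hy ->; by rewrite inE HP'.
  have Em : msz a b c (q x) = msz a b c (q (s x)).
    by rewrite !msz_m //; apply/eqP; rewrite eqn_leq L1 L2.
  have Hne2 : q x != q (s x) by rewrite eq_sym.
  have [i Hi Hw] := fcol_wit ha hb hc (q3 x) (q3 (s x)) Hne2 Em.
  rewrite msz_m // in Hi.
  have [y [Hy Ry]] := rk_surj x Hi.
  have := Hw (rk (s y)); rewrite msz_m // -(HP y Hy) rk_lt => /(_ isT).
  by rewrite -Ry -Hy Hc' eqxx.
apply/eqP/permP => x; rewrite perm1; apply: rk_inj (Q x) _.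
apply: (@fcol_inj a b c (q x)) => //.
- by rewrite msz_m // -(Q x); exact: rk_lt.
- by rewrite msz_m //; exact: rk_lt.
- by rewrite -{1}(Q x) Hc'.
Qed.

Lemma has_dcol_col : has_dcol e k.+1.
Proof. by apply/existsP; exists colf; exact: colf_dist. Qed.

End Col.
Section K122.
Variables (T : finType) (e : rel T).
Hypothesis Hsym : symmetric e.
Hypothesis Hirr : irreflexive e.
Variable q : T -> nat.
Hypothesis q3 : forall x, q x < 3.
Hypothesis Hcross : forall x y, q x != q y -> e x y.
Hypothesis Hin : forall x y, q x = q y -> q x != 0 -> e x y = false.
Variables (c0 a1 a2 b1 b2 : T).
Hypothesis H0 : [set x | q x == 0] = [set c0].
Hypothesis H1 : [set x | q x == 1] = [set a1; a2].
Hypothesis H2 : [set x | q x == 2] = [set b1; b2].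
Hypothesis Ha12 : a1 != a2.
Hypothesis Hb12 : b1 != b2.

Let qE p x : (q x == p) = (x \in [set x | q x == p]).
Proof. by rewrite inE. Qed.

Let q0 x : (q x == 0) = (x == c0). Proof. by rewrite qE H0 inE. Qed.
Let q1 x : (q x == 1) = (x == a1) || (x == a2). Proof. by rewrite qE H1 !inE. Qed.
Let q2 x : (q x == 2) = (x == b1) || (x == b2). Proof. by rewrite qE H2 !inE. Qed.

Let qc0 : q c0 = 0. Proof. by apply/eqP; rewrite q0. Qed.
Let qa1 : q a1 = 1. Proof. by apply/eqP; rewrite q1 eqxx. Qed.
Let qa2 : q a2 = 1. Proof. by apply/eqP; rewrite q1 eqxx orbT. Qed.
Let qb1 : q b1 = 2. Proof. by apply/eqP; rewrite q2 eqxx. Qed.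
Let qb2 : q b2 = 2. Proof. by apply/eqP; rewrite q2 eqxx orbT. Qed.

Let eE x y : e x y = (q x != q y).
Proof.
case: (eqVneq (q x) (q y)) => E; last exact: Hcross.
case: (eqVneq (q x) 0) => E0; last exact: Hin.
have : x == c0 by rewrite -q0 E0.
have : y == c0 by rewrite -q0 -E E0.
by move=> /eqP -> /eqP ->; rewrite Hirr.
Qed.

Let neq_q x y : q x != q y -> x != y.
Proof. by apply: contra => /eqP ->. Qed.

Let autq (s : {perm T}) : (forall x y, (q (s x) == q (s y)) = (q x == q y)) -> is_autb e s.
Proof.
move=> H; apply/forallP => x; apply/forallP => y; by rewrite !eE H.
Qed.

Lemma I2 k (x y z : 'I_k) : k <= 2 -> x != y -> z != x -> z = y.
Proof.
move=> hk; rewrite -!(inj_eq (@ord_inj k)) => hxy hzx; apply: ord_inj.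
move: (ltn_ord x) (ltn_ord y) (ltn_ord z) hxy hzx; lia.
Qed.

Definition sw p := if p == 1 then 2 else if p == 2 then 1 else p.
Lemma swK : involutive sw.
Proof. by move=> p; rewrite /sw; case: p => [|[|[|]]]. Qed.

Lemma K122_lower k : has_dcol e k -> 3 <= k.
Proof.
case/existsP => col /forallP Hd.
have D : forall s : {perm T}, is_autb e s -> (forall x, col (s x) = col x) -> s = 1%g.
  move=> s Ha Hc; apply/eqP; move/implyP: (Hd s); apply; rewrite Ha /=.
  by apply/forallP => x; rewrite Hc.
have Tw : forall u v, q u = q v -> u != v -> col u != col v.
  move=> u v Euv Huv; apply/negP => /eqP Ec.
  have Hq : forall x, q (tperm u v x) = q x.
    by move=> x; case: tpermP => // ->.
  have Ht : is_autb e (tperm u v) by apply: autq => x y; rewrite !Hq.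
  have := D (tperm u v) Ht.
  have H : forall x, col (tperm u v x) = col x by move=> x; case: tpermP => // ->.
  move/(_ H)/permP/(_ u); rewrite tpermL perm1 => E; move: Huv; by rewrite E eqxx.
have ca := Tw a1 a2 (etrans qa1 (esym qa2)) Ha12.
have cb := Tw b1 b2 (etrans qb1 (esym qb2)) Hb12.
have Sw : forall b b', q b = 2 -> q b' = 2 -> b != b' -> col b = col a1 -> col b' = col a2 -> False.
  move=> b b' qb qb' Hbb' Cb Cb'.
  have d1 : a1 != b by apply: neq_q; rewrite qa1 qb.
  have d2 : a2 != b by apply: neq_q; rewrite qa2 qb.
  have d3 : a1 != b' by apply: neq_q; rewrite qa1 qb'.
  have d4 : a2 != b' by apply: neq_q; rewrite qa2 qb'.
  have d1' : b != a1 by rewrite eq_sym.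
  have d2' : b != a2 by rewrite eq_sym.
  have d3' : b' != a1 by rewrite eq_sym.
  have d4' : b' != a2 by rewrite eq_sym.
  have Ha21 : a2 != a1 by rewrite eq_sym.
  have Hb'b : b' != b by rewrite eq_sym.
  pose s := (tperm a1 b * tperm a2 b')%g.
  have sa1 : s a1 = b by rewrite permM tpermL tpermD.
  have sb : s b = a1 by rewrite permM tpermR tpermD.
  have sa2 : s a2 = b' by rewrite permM (tpermD Ha12 d2') tpermL.
  have sb' : s b' = a2 by rewrite permM (tpermD d3 Hbb') tpermR.
  have sx : forall x, x != a1 -> x != a2 -> x != b -> x != b' -> s x = x.
    move=> x n1 n2 n3 n4; rewrite eq_sym in n1; rewrite eq_sym in n2.
    rewrite eq_sym in n3; rewrite eq_sym in n4.
    by rewrite permM (tpermD n1 n3) (tpermD n2 n4).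
  have Hs : forall x, q (s x) = sw (q x) /\ col (s x) = col x.
    move=> x.
    case: (eqVneq x a1) => [->|n1]; first by rewrite sa1 qa1 qb Cb.
    case: (eqVneq x a2) => [->|n2]; first by rewrite sa2 qa2 qb' Cb'.
    case: (eqVneq x b) => [->|n3]; first by rewrite sb qa1 qb Cb.
    case: (eqVneq x b') => [->|n4]; first by rewrite sb' qa2 qb' Cb'.
    rewrite sx //; split => //.
    have : q x != 1 by rewrite q1 negb_or n1 n2.
    have : q x != 2.
      apply/negP => /eqP qx.
      have hx : (x == b1) || (x == b2) by rewrite -q2 qx.
      have hb : (b == b1) || (b == b2) by rewrite -q2 qb.
      have hb' : (b' == b1) || (b' == b2) by rewrite -q2 qb'.
      move: hx hb hb' n3 n4 Hbb'.
      by case/orP => /eqP ->; case/orP => /eqP ->; case/orP => /eqP ->; rewrite ?eqxx.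
    by rewrite /sw => /negbTE -> /negbTE ->.
  have := D s.
  have Ha : is_autb e s.
    apply: autq => x y; rewrite !(fun z => proj1 (Hs z)).
    by rewrite (inj_eq (can_inj swK)).
  move/(_ Ha (fun x => proj2 (Hs x)))/permP/(_ a1); rewrite sa1 perm1 => E.
  by move: d1; rewrite E eqxx.
rewrite leqNgt; apply/negP => Hk; have hk2 : k <= 2 by rewrite -ltnS.
case: (eqVneq (col b1) (col a1)) => E.
  apply: (Sw b1 b2 qb1 qb2 Hb12 E); apply: (I2 hk2 ca).
  by rewrite -E eq_sym.
have E1 : col b1 = col a2 by apply: (I2 hk2 ca).
apply: (Sw b2 b1 qb2 qb1 _ _ E1); first by rewrite eq_sym.
apply: (I2 hk2 (x := col a2)); first by rewrite eq_sym.
by rewrite -E1 eq_sym.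
Qed.

Definition fk (x : T) : Ktri_vert 1 2 2 :=
  if q x == 0 then inl (inl ord0)
  else if q x == 1 then inl (inr (if x == a1 then ord0 else ord_max))
  else inr (if x == b1 then ord0 else ord_max).

Definition gk (v : Ktri_vert 1 2 2) : T :=
  match v with
  | inl (inl _) => c0
  | inl (inr i) => if i == ord0 then a1 else a2
  | inr i => if i == ord0 then b1 else b2
  end.

Let q2' x : q x != 0 -> q x != 1 -> q x = 2.
Proof. by move: (q3 x); case: (q x) => [|[|[|]]]. Qed.

Let ordmax (i : 'I_2) : i != ord0 -> i = ord_max.
Proof. by move=> H; apply: ord_inj; move: (ltn_ord i) H; rewrite -(inj_eq (@ord_inj 2)); case: (nat_of_ord i) => [|[|]]. Qed.

Let fgK : cancel fk gk.
Proof.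
move=> x; rewrite /fk.
case E0: (q x == 0); first by rewrite q0 in E0; rewrite (eqP E0).
case E1: (q x == 1).
  move: E1; rewrite q1 => /orP [] /eqP ->; first by rewrite eqxx /= ?eqxx.
  by rewrite eq_sym (negbTE Ha12).
have : q x == 2 by rewrite q2' ?E0 ?E1.
rewrite q2 => /orP [] /eqP ->; first by rewrite eqxx /= ?eqxx.
by rewrite eq_sym (negbTE Hb12).
Qed.

Let gfK : cancel gk fk.
Proof.
case => [[i|i]|i] /=; rewrite /fk.
- by rewrite qc0 /= (ord1 i).
- case: (eqVneq i ord0) => [->|Hi]; first by rewrite qa1 /= ?eqxx.
  by rewrite qa2 /= eq_sym (negbTE Ha12) (ordmax Hi).
- case: (eqVneq i ord0) => [->|Hi]; first by rewrite qb1 /= ?eqxx.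
  by rewrite qb2 /= eq_sym (negbTE Hb12) (ordmax Hi).
Qed.

Let tpf x : tri_part (fk x) = q x.
Proof.
rewrite /fk; case E0: (q x == 0); first by rewrite (eqP E0).
case E1: (q x == 1); first by rewrite (eqP E1).
by rewrite q2' ?E0 ?E1.
Qed.

Lemma K122_iso : graph_iso e (Ktri 1 2 2).
Proof.
exists fk; split; first by exists gk.
by move=> x y; rewrite /Ktri !tpf eE.
Qed.

End K122.

Lemma card_part (T : finType) (q : T -> nat) : (forall x, q x < 3) ->
  #|T| = #|[set x | q x == 0]| + #|[set x | q x == 1]| + #|[set x | q x == 2]|.
Proof.
move=> q3.
have E1 : [set: T] :&: [set x | q x == 0] = [set x | q x == 0] by rewrite setTI.
have E2 : ([set: T] :\: [set x | q x == 0]) :&: [set x | q x == 1] = [set x | q x == 1].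
  by apply/setP => x; rewrite !inE; case: (q x) => [|[|]].
have E3 : ([set: T] :\: [set x | q x == 0]) :\: [set x | q x == 1] = [set x | q x == 2].
  by apply/setP => x; rewrite !inE; move: (q3 x); case: (q x) => [|[|[|]]].
rewrite -cardsT -(cardsID [set x | q x == 0] [set: T]).
rewrite -(cardsID [set x | q x == 1] (_ :\: _)) E1 E2 E3; exact: addnA.
Qed.

Lemma kt_part t (x y : Ktri_vert 1 1 t) : x != y -> tri_part x = tri_part y -> tri_part x = 2.
Proof.
case: x => [[i|i]|i]; case: y => [[j|j]|j] //=; by rewrite (ord1 i) (ord1 j) eqxx.
Qed.

Lemma no_K11t (T : finType) (e : rel T) (q : T -> nat) a1 a2 b1 b2 t :
  (forall x y, q x != q y -> e x y) ->
  (forall x y, q x = q y -> q x != 0 -> e x y = false) ->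
  q a1 = 1 -> q a2 = 1 -> q b1 = 2 -> q b2 = 2 -> a1 != a2 -> b1 != b2 ->
  ~ graph_iso e (Ktri 1 1 t).
Proof.
move=> Hc Hi qa1 qa2 qb1 qb2 Ha Hb [f [fb Hf]].
have fi := bij_inj fb.
have P : forall u v, q u = q v -> q u != 0 -> u != v -> tri_part (f u) = 2.
  move=> u v Euv Hu Huv; apply: (kt_part (y := f v)); first by rewrite (inj_eq fi).
  by apply/eqP; move: (Hf u v); rewrite Hi // /Ktri => /negbT; rewrite negbK.
have := Hf a1 b1; rewrite Hc ?qa1 ?qb1 // /Ktri.
rewrite (P a1 a2) ?qa1 ?qa2 // (P b1 b2) ?qb1 ?qb2 //.
Qed.

Lemma dist_le (T : finType) (e : rel T) k : has_dcol e k -> dist_number e <= k.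
Proof. by rewrite /dist_number; case: ex_minnP => m _ H; exact: H. Qed.

Lemma dist_has (T : finType) (e : rel T) : has_dcol e (dist_number e).
Proof. by rewrite /dist_number; case: ex_minnP. Qed.

Theorem lemma4p5 (T : finType) (e : rel T) :
  simple_graph e ->
  twin_graph_K3 e ->
  #|[set A in twin_classes e | type1K e A]| <= 1 ->
  (dist_number e = #|T| - 2 <->
   graph_iso e (Ktri 1 2 2) \/ (exists t, 2 <= t /\ graph_iso e (Ktri 1 1 t))).
Proof.
move=> [Hsym Hirr] HK3 H1K.
have [q [q3 Hq Hcross Hin [hA hB hC]]] := structure Hsym Hirr HK3 H1K.
have HT := card_part q3.
set a := #|[set x | q x == 1]| in hA HT *.
set b := #|[set x | q x == 2]| in hB HT *.
set c := #|[set x | q x == 0]| in hC HT *.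
have K122 : a = 2 -> b = 2 -> c = 1 -> graph_iso e (Ktri 1 2 2) /\ dist_number e = 3.
  move=> Ea Eb Ec.
  move/eqP: (Ea) => /cards2P [a1 [a2 [Ha12 H1]]].
  move/eqP: (Eb) => /cards2P [b1 [b2 [Hb12 H2]]].
  move/eqP: (Ec) => /cards1P [c0 H0].
  split; first exact: (K122_iso Hirr q3 Hcross Hin H0 H1 H2 Ha12 Hb12).
  apply/eqP; rewrite eqn_leq; apply/andP; split.
    apply: dist_le; apply: (has_dcol_col Hirr q3 Hq hA hB hC).
    by cbv beta; rewrite -/a -/b -/c Ea Eb Ec.
  exact: (K122_lower Hirr Hcross Hin H0 H1 H2 Ha12 Hb12 (dist_has e)).
have HK11 : forall t, ~ graph_iso e (Ktri 1 1 t).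
  move: (hA) (hB) => /card_gt1P [a1 [a2 [Ha1 Ha2 Ha12]]] /card_gt1P [b1 [b2 [Hb1 Hb2 Hb12]]].
  move: Ha1 Ha2 Hb1 Hb2; rewrite !inE => /eqP qa1 /eqP qa2 /eqP qb1 /eqP qb2 t.
  exact: (no_K11t Hcross Hin qa1 qa2 qb1 qb2 Ha12 Hb12).
have ar1 : forall a b c d : nat, 2 <= a -> 2 <= b -> 1 <= c ->
    d <= a + b + c - 4 + 1 -> d = c + a + b - 2 -> False.
  by move=> *; lia.
have ar2 : forall a b c : nat, 2 <= a -> 2 <= b -> 1 <= c -> c + a + b = 5 ->
    [/\ a = 2, b = 2 & c = 1].
  by move=> *; split; lia.
split.
- move=> HD; case E: [&& a == 2, b == 2 & c == 1].
    by case/and3P: E => /eqP Ea /eqP Eb /eqP Ec; left; exact: (K122 Ea Eb Ec).1.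
  exfalso.
  have : dist_number e <= a + b + c - 4 + 1.
    apply: dist_le; rewrite addn1; apply: (has_dcol_col Hirr q3 Hq hA hB hC).
    by cbv beta; rewrite -/a -/b -/c; apply: arith_main => //; rewrite E.
  move/(ar1 a b c _ hA hB hC); apply; by rewrite HD HT.
- case => [Hiso | [t [_ Hiso]]]; last by case: (HK11 t).
  have H5 : c + a + b = 5.
    case: Hiso => f [fb _]; rewrite -HT (bij_eq_card fb).
    by rewrite /Ktri_vert !card_sum !card_ord.
  have [Ea Eb Ec] := ar2 a b c hA hB hC H5.
  by rewrite (K122 Ea Eb Ec).2 HT H5.
Qed.
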